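(* Fix $R\in(0,1)$ and, when $\Delta_S^B\ne0$, let $\tilde i=\Delta_O^B/\Delta_S^B$. Let $\mathbb E[\cdot]$ denote expectation with respect to $i\sim F$. The value $V(R)$ of the recommendation system equals: (i) $\pi^B\big[\Delta_O^B-\Delta_S^B\,\mathbb E[i]\big]$ if $|\Delta_S^B|\le 2\Delta_O^B$; (ii) $(1-\pi^B)F(\tilde i)\big[\Delta_O^D-\Delta_S^D\,\mathbb E[i\mid i\le\tilde i]\big]+\pi^B(1-F(\tilde i))\big[\Delta_O^B-\Delta_S^B\,\mathbb E[i\mid i\ge\tilde i]\big]$ if $\Delta_S^B<-2\Delta_O^B$; (iii) $\pi^BF(\tilde i)\big[\Delta_O^B-\Delta_S^B\,\mathbb E[i\mid i\le\tilde i]\big]+(1-\pi^B)(1-F(\tilde i))\big[\Delta_O^D-\Delta_S^D\,\mathbb E[i\mid i\ge\tilde i]\big]$ if $\Delta_S^B>2\Delta_O^B$.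
   Context: Setting. Consumer types are $i\in[-1/2,1/2]$, distributed according to a continuous cumulative distribution function $F$ with full support on $[-1/2,1/2]$. A product has a quality vector $(Q_1,Q_2)\in\{0,1\}^2$; a type-$i$ consumer gets payoff $(1/2+i)Q_1+(1/2-i)Q_2$ from it. The versions $(1,1),(1,0),(0,1),(0,0)$ have prior probabilities $q_H,q_1,q_2,q_L$ respectively, all strictly positive and summing to $1$. One product carries a recommendation from a sender whose type is drawn from $F$ independently of the product; given a threshold $R\in(0,1)$, the sender gives a buy recommendation $B$ if her payoff from the product is at least $R$ and a don't-buy recommendation $D$ otherwise. Let $\phi_1(R)=1-F(R-1/2)$, $\phi_2(R)=F(1/2-R)$, $\pi^B=q_H+q_1\phi_1(R)+q_2\phi_2(R)$ and $\pi^D=1-\pi^B$. Posteriors: $p^B_H=q_H/\pi^B$, $p^B_1=q_1\phi_1(R)/\pi^B$, $p^B_2=q_2\phi_2(R)/\pi^B$, $p^B_L=0$; $p^D_H=0$, $p^D_1=q_1(1-\phi_1(R))/\pi^D$, $p^D_2=q_2(1-\phi_2(R))/\pi^D$, $p^D_L=q_L/\pi^D$. For $r\in\{B,D\}$ let $U_i^r=p_H^r+(1/2+i)p_1^r+(1/2-i)p_2^r$ and $U_i^0=q_H+(1/2+i)q_1+(1/2-i)q_2$. The objective and subjective effects of $r\in\{B,D\}$ are $\Delta_O^r=p_H^r-q_H+\frac{p_1^r-q_1}{2}+\frac{p_2^r-q_2}{2}$ and $\Delta_S^r=(p_2^r-q_2)-(p_1^r-q_1)$. The value of the recommendation system is the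 expected payoff gain of a receiver drawn from $F$ (independently of the sender) who, after observing the recommendation, optimally chooses between the recommended product and an unrecommended alternative: $V(R)=\pi^B\int_{-1/2}^{1/2}\max\{U_i^B-U_i^0,0\}\,dF(i)+\pi^D\int_{-1/2}^{1/2}\max\{U_i^D-U_i^0,0\}\,dF(i)$. *)

(* Defs.v *)
(* Consumer types i ∈ [-1/2,1/2] are
   modelled by a probability measure P on the real line (Borel sets). *)
From HB Require Import structures.
From mathcomp Require Import all_boot all_order all_algebra.
From mathcomp Require Import all_classical all_reals all_analysis.
Set Implicit Arguments. Unset Strict Implicit. Unset Printing Implicit Defensive.
Import Order.TTheory GRing.Theory Num.Theory.
Local Open Scope classical_set_scope.
Local Open Scope ring_scope.

Section Model.
Variables (R : realType) (P : probability R R).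
Variables (qH q1 q2 qL : R).

Definition F (x : R) : R := fine (P `]-oo, x]%classic).

Definition Eint (A : set R) (f : R -> R) : R :=
  fine (\int[P]_(x in A) (f x)%:E)%E.

Definition Ei : R := Eint setT id.
Definition Ei_le (t : R) : R := Eint `]-oo, t]%classic id / fine (P `]-oo, t]%classic).
Definition Ei_ge (t : R) : R := Eint `[t, +oo[%classic id / fine (P `[t, +oo[%classic).

Variable Rth : R.

Definition phi1 : R := 1 - F (Rth - 2^-1).
Definition phi2 : R := F (2^-1 - Rth).
Definition piB : R := qH + q1 * phi1 + q2 * phi2.
Definition piD : R := 1 - piB.

Definition pBH : R := qH / piB.
Definition pB1 : R := q1 * phi1 / piB.
Definition pB2 : R := q2 * phi2 / piB.
Definition pBL : R := 0.
Definition pDH : R := 0.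
Definition pD1 : R := q1 * (1 - phi1) / piD.
Definition pD2 : R := q2 * (1 - phi2) / piD.
Definition pDL : R := qL / piD.

Definition UB (i : R) : R := pBH + (2^-1 + i) * pB1 + (2^-1 - i) * pB2.
Definition UD (i : R) : R := pDH + (2^-1 + i) * pD1 + (2^-1 - i) * pD2.
Definition U0 (i : R) : R := qH + (2^-1 + i) * q1 + (2^-1 - i) * q2.

Definition DOB : R := pBH - qH + (pB1 - q1) / 2 + (pB2 - q2) / 2.
Definition DSB : R := (pB2 - q2) - (pB1 - q1).
Definition DOD : R := pDH - qH + (pD1 - q1) / 2 + (pD2 - q2) / 2.
Definition DSD : R := (pD2 - q2) - (pD1 - q1).

Definition V : R :=
  piB * Eint setT (fun i => Num.max (UB i - U0 i) 0)
  + piD * Eint setT (fun i => Num.max (UD i - U0 i) 0).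

Definition itilde : R := DOB / DSB.
End Model.

(* Main.v *)
Require Import Defs.
From HB Require Import structures.
From mathcomp Require Import all_boot all_order all_algebra.
From mathcomp Require Import all_classical all_reals all_analysis.
From mathcomp Require Import ring lra measurable_realfun.
Import Order.TTheory GRing.Theory Num.Theory.
Import numFieldNormedType.Exports.
Local Open Scope classical_set_scope.
Local Open Scope ring_scope.

Section Aux.
Variables (R : realType) (P : probability R R).

Lemma PfinE (A : set R) : measurable A -> P A = (fine (P A))%:E.
Proof. by move=> mA; rewrite fineK// fin_num_measure. Qed.

Lemma F_ge0 x : 0 <= F P x.
Proof. by rewrite /F fine_ge0// measure_ge0. Qed.

Lemma F_le1 x : F P x <= 1.
Proof.
rewrite /F -lee_fin -PfinE; last exact: measurable_itv.
exact: probability_le1 (measurable_itv _).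
Qed.

Lemma FE x : P `]-oo, x]%classic = (F P x)%:E.
Proof. by rewrite /F fineK// fin_num_measure. Qed.

Lemma Pitv_oc x y : x <= y ->
  P `]x, y]%classic = (F P y - F P x)%:E.
Proof.
move=> xy.
have e : `]-oo, y]%classic = `]-oo, x]%classic `|` `]x, y]%classic :> set R.
  by apply: itv_bndbnd_setU; rewrite bnd_simp.
have h : F P y = F P x + fine (P `]x, y]%classic).
  rewrite /F e measureU//; last first.
    apply/seteqP; split => z //= []; rewrite !in_itv /= => zx /andP[xz _].
    by move: (lt_le_trans xz zx); rewrite ltxx.
  by rewrite fineD// fin_num_measure.
rewrite (@PfinE `]x, y]%classic (measurable_itv _)) h; congr EFin; ring.
Qed.

Lemma Ppoint0 : continuous (F P) -> forall x, P [set x] = 0.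
Proof.
move=> cF x.
have le e : 0 < e -> fine (P [set x]) <= F P x - F P (x - e).
  move=> e0; rewrite -lee_fin -(@PfinE [set x] (measurable_set1 _)).
  rewrite -Pitv_oc; last by rewrite lerBlDr lerDl ltW.
  apply: le_measure; rewrite ?inE; [exact: measurable_set1|exact: measurable_itv|].
  by move=> z /= ->; rewrite in_itv /= lexx andbT ltrBlDr ltrDl.
have c0 : 0 <= fine (P [set x]) by rewrite fine_ge0// measure_ge0.
suff : fine (P [set x]) <= 0.
  move=> h; rewrite (@PfinE [set x] (measurable_set1 _)).
  by congr EFin; apply/eqP; rewrite eq_le h c0.
rewrite leNgt; apply/negP => cpos.
have := cvgr_dist_lt (F P) (F P x) (cF x) _ cpos.
move=> hn; have [d /= d0 hd] := (proj1 (nbhs_ballP _ _) (hn _)).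
have hb : ball x d (x - d / 2).
  rewrite -ball_normE /ball_ /= (_ : x - (x - d / 2) = d / 2); last by ring.
  rewrite ger0_norm; last by rewrite divr_ge0// ltW.
  by rewrite ltr_pdivrMr// ltr_pMr// ltr1n.
have := hd _ hb; rewrite ger0_norm; last first.
  by apply: (le_trans c0 (le (d/2) _)); rewrite divr_gt0.
move=> h1; have := le (d / 2) ltac:(by rewrite divr_gt0).
by move=> h2; move: (le_lt_trans h2 h1); rewrite ltxx.
Qed.

Lemma Pge (cF : continuous (F P)) x :
  fine (P `[x, +oo[%classic) = 1 - F P x.
Proof.
have h1 : P `]-oo, x[%classic = (F P x)%:E.
  have e : `]-oo, x]%classic = `]-oo, x[%classic `|` [set x] :> set R.
    by rewrite setUitv1// bnd_simp.
  rewrite -FE e measureU//.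
  - by rewrite -[LHS]adde0; congr (_ + _); exact/esym/(Ppoint0 cF x).
  - by apply/seteqP; split => z //= [] +  /= zx; rewrite -zx in_itv /= ltxx.
rewrite -setCitvl probability_setC; last exact: measurable_itv.
by rewrite h1.
Qed.

Lemma Eint_eq (A : set R) (f g : R -> R) : {in A, f =1 g} -> Eint P A f = Eint P A g.
Proof. by move=> fg; rewrite /Eint (eq_integral (fun x => (g x)%:E))// => x /fg ->. Qed.

Lemma Eint_patch (A : set R) (f g : R -> R) :
  (forall x, f x = if x \in A then g x else 0) -> Eint P setT f = Eint P A g.
Proof.
move=> fg; rewrite /Eint [in RHS]integral_mkcond; congr fine.
apply: eq_integral => x _; rewrite patchE fg /=.
by case: ifP.
Qed.

Lemma Eint0 (A : set R) : Eint P A (fun _ => 0) = 0.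
Proof. by rewrite /Eint integral0. Qed.

Section Supp.
Hypothesis HI : P `[- 2^-1, 2^-1]%classic = 1%E.
Let I := `[- 2^-1, 2^-1]%classic : set R.
Let mI : measurable I. Proof. exact: measurable_itv. Qed.

Lemma PNI0 : P (~` I) = 0%E.
Proof. by rewrite probability_setC// HI subee. Qed.

Lemma int_id : P.-integrable setT (EFin \o id).
Proof.
apply/integrableP; split; first by apply/measurable_EFinP.
have mabs : measurable_fun setT (fun x : R => `|(EFin \o id) x|%E).
  apply: measurableT_comp; first exact: abse_measurable.
  by apply/measurable_EFinP.
rewrite (@ge0_negligible_integral _ _ _ P setT (~` I))//; last first.
  exact: PNI0.
  exact: measurableC.
rewrite setTD setCK.
apply: (@le_lt_trans _ _ (\int[P]_(x in I) (cst (2^-1 : R)%:E) x)%E).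
  apply: ge0_le_integral => //.
  - exact: (measurable_funS measurableT (@subsetT _ _) mabs).
  - move=> x; rewrite /I /= in_itv /= => /andP[h1 h2].
    by rewrite lee_fin ler_norml h1 h2.
have HIm : (P : {measure set R -> \bar R}) I = 1%E := HI.
by rewrite integral_cst// HIm mule1 ltry.
Qed.

Lemma EintT_I (f : R -> R) : measurable_fun setT f -> (forall x, 0 <= f x) ->
  Eint P setT f = Eint P I f.
Proof.
move=> mf f0; rewrite /Eint.
rewrite (@ge0_negligible_integral _ _ _ P setT (~` I))//.
- by rewrite setTD setCK.
- exact: measurableC.
- exact/measurable_EFinP.
- by move=> x _; rewrite lee_fin.
- exact: PNI0.
Qed.

Lemma EintT_I_id : Eint P setT id = Eint P I id.
Proof.
rewrite /Eint (@negligible_integral _ _ _ P setT (~` I))//.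
- by rewrite setTD setCK.
- exact: measurableC.
- exact: int_id.
- exact: PNI0.
Qed.

Lemma int_idA (A : set R) : measurable A -> P.-integrable A (EFin \o id).
Proof. by move=> mA; apply: (integrableS measurableT mA _ int_id). Qed.

Lemma lin (A : set R) (a b : R) : measurable A ->
  Eint P A (fun x => a - x * b) = a * fine (P A) - b * Eint P A id.
Proof.
move=> mA; rewrite /Eint.
have iA := @int_idA A mA.
have ic : P.-integrable A (EFin \o cst a) by exact: finite_measure_integrable_cst.
have ib : P.-integrable A (EFin \o (fun x => x * b)).
  have := integrableZl mA b iA; apply: eq_integrable => // x _ /=.
  by rewrite -EFinM mulrC.
rewrite (eq_integral (fun x : R => ((cst a x)%:E - (x * b)%:E)%E)); last first.
  by move=> x _; rewrite EFinB.
rewrite integralB_EFin//.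
have e1 : (\int[P]_(x in A) (cst a x)%:E = a%:E * P A)%E.
  by rewrite (eq_integral (cst a%:E))// integral_cst.
have e2 : (\int[P]_(x in A) (x * b)%:E = b%:E * \int[P]_(x in A) (EFin \o id) x)%E.
  rewrite -integralZl//; apply: eq_integral => x _ /=.
  by rewrite -EFinM mulrC.
rewrite e1 e2.
have f1 : (\int[P]_(x in A) (EFin \o id) x)%E \is a fin_num by exact: integrable_fin_num.
have f2 : (P : {measure set R -> \bar R}) A \is a fin_num by exact: fin_num_measure.
rewrite fineB ?fin_numM// fineM// fineM//.
Qed.

Lemma cond (A : set R) : measurable A ->
  fine (P A) * (Eint P A id / fine (P A)) = Eint P A id.
Proof.
move=> mA; have [h|h] := eqVneq (fine (P A)) 0; last first.
  by rewrite mulrC divfK.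
rewrite h mul0r; apply/esym.
have PA0 : (P : {measure set R -> \bar R}) A = 0%E.
  by apply: (etrans (@PfinE A mA)); rewrite h.
rewrite /Eint (@negligible_integral _ _ _ P A A)//; last exact: int_idA.
by rewrite setDv integral_set0.
Qed.

End Supp.

End Aux.

Section Alg.
Variables (R : realType) (P : probability R R) (qH q1 q2 qL Rth : R).
Hypotheses (hqH : 0 < qH) (hq1 : 0 < q1) (hq2 : 0 < q2) (hqL : 0 < qL)
  (hsum : qH + q1 + q2 + qL = 1).

Ltac hyps := have := hqH; have := hq1; have := hq2; have := hqL; have := hsum; move=> *.
Let p1 := phi1 P Rth.
Let p2 := phi2 P Rth.
Lemma p1_01 : 0 <= p1 <= 1.
Proof. by rewrite /p1 /phi1 subr_ge0 F_le1 lerBlDr lerDl F_ge0. Qed.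
Lemma p2_01 : 0 <= p2 <= 1.
Proof. by rewrite /p2 /phi2 F_le1 F_ge0. Qed.

Lemma piB_gt0 : 0 < piB P qH q1 q2 Rth.
Proof.
have /andP[a1 b1] := p1_01; have /andP[a2 b2] := p2_01.
hyps; rewrite /piB -/p1 -/p2.
have : 0 <= q1 * p1 by rewrite mulr_ge0// ltW.
have : 0 <= q2 * p2 by rewrite mulr_ge0// ltW.
move=> x y; lra.
Qed.

Lemma piB_lt1 : piB P qH q1 q2 Rth < 1.
Proof.
have /andP[a1 b1] := p1_01; have /andP[a2 b2] := p2_01.
hyps; rewrite /piB -/p1 -/p2.
have : q1 * p1 <= q1 by rewrite ler_piMr// ltW.
have : q2 * p2 <= q2 by rewrite ler_piMr// ltW.
lra.
Qed.

Lemma DOB_gt0 : 0 < DOB P qH q1 q2 Rth.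
Proof.
have h0 := piB_gt0; have h1 := piB_lt1.
have e : DOB P qH q1 q2 Rth = (qH / piB P qH q1 q2 Rth - qH + qL) / 2.
  rewrite /DOB /pBH /pB1 /pB2.
  have -> : qL = 1 - qH - q1 - q2 by hyps; lra.
  set pi := piB _ _ _ _ _.
  have epi : q1 * phi1 P Rth = pi - qH - q2 * phi2 P Rth by rewrite /pi /piB; ring.
  rewrite epi; field. by rewrite gt_eqF.
hyps; rewrite e divr_gt0//.
have : qH <= qH / piB P qH q1 q2 Rth.
  by rewrite ler_pdivlMr// ler_piMr// ?ltW.
lra.
Qed.

Lemma UBE i : UB P qH q1 q2 Rth i - U0 qH q1 q2 i = DOB P qH q1 q2 Rth - i * DSB P qH q1 q2 Rth.
Proof. rewrite /UB /U0 /DOB /DSB /pBH; ring. Qed.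

Lemma UDE i : UD P qH q1 q2 Rth i - U0 qH q1 q2 i = DOD P qH q1 q2 Rth - i * DSD P qH q1 q2 Rth.
Proof. rewrite /UD /U0 /DOD /DSD /pDH; ring. Qed.

Lemma hgE i : DOD P qH q1 q2 Rth - i * DSD P qH q1 q2 Rth =
  - (piB P qH q1 q2 Rth / piD P qH q1 q2 Rth) * (DOB P qH q1 q2 Rth - i * DSB P qH q1 q2 Rth).
Proof.
have h0 := piB_gt0; have h1 := piB_lt1.
rewrite /DOD /DSD /DOB /DSB /pDH /pD1 /pD2 /pBH /pB1 /pB2 /piD.
set pi := piB _ _ _ _ _.
hyps; field. by rewrite gt_eqF// subr_eq0 eq_sym lt_eqF.
Qed.

End Alg.

Lemma mmax (R : realType) (a b : R) : measurable_fun setT (fun x : R => Num.max (a - x * b) 0).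
Proof.
apply: measurable_maxr => //.
apply: measurable_funB => //.
exact: measurable_funM.
Qed.

Set Bullet Behavior "Strict Subproofs".
Theorem proposition3 (R : realType) (P : probability R R)
  (qH q1 q2 qL Rth : R) :
  0 < qH -> 0 < q1 -> 0 < q2 -> 0 < qL -> qH + q1 + q2 + qL = 1 ->
  (* types lie in [-1/2, 1/2] *)
  P `[- 2^-1, 2^-1]%classic = 1%E ->
  (* the CDF F is continuous *)
  continuous (F P : R -> R) ->
  (* full support on [-1/2, 1/2]: F strictly increasing there *)
  (forall a b : R, - 2^-1 <= a -> a < b -> b <= 2^-1 -> F P a < F P b) ->
  0 < Rth < 1 ->
  let piB := piB P qH q1 q2 Rth in
  let DOB := DOB P qH q1 q2 Rth in
  let DSB := DSB P qH q1 q2 Rth in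
  let DOD := DOD P qH q1 q2 Rth in
  let DSD := DSD P qH q1 q2 Rth in
  let it := itilde P qH q1 q2 Rth in
  let V := V P qH q1 q2 Rth in
  (`|DSB| <= 2 * DOB -> V = piB * (DOB - DSB * Ei P)) /\
  (DSB < - (2 * DOB) ->
     V = (1 - piB) * F P it * (DOD - DSD * Ei_le P it)
         + piB * (1 - F P it) * (DOB - DSB * Ei_ge P it)) /\
  (2 * DOB < DSB ->
     V = piB * F P it * (DOB - DSB * Ei_le P it)
         + (1 - piB) * (1 - F P it) * (DOD - DSD * Ei_ge P it)).
Proof.
move=> hqH hq1 hq2 hqL hsum HI cF _ hR piB DOB DSB DOD DSD it V.
have pi0 : 0 < piB := (@piB_gt0 R P qH q1 q2 qL Rth hqH hq1 hq2 hqL hsum).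
have pi1 : piB < 1 := (@piB_lt1 R P qH q1 q2 qL Rth hqH hq1 hq2 hqL hsum).
have dob : 0 < DOB := (@DOB_gt0 R P qH q1 q2 qL Rth hqH hq1 hq2 hqL hsum).
have eV : V = piB * Eint P setT (fun x => Num.max (DOB - x * DSB) 0)
   + (1 - piB) * Eint P setT (fun x => Num.max (DOD - x * DSD) 0).
  rewrite /V /Defs.V /Defs.piD; congr (_ * _ + _ * _); congr Eint; apply: funext => x.
    by rewrite UBE.
  by rewrite UDE.
set k := piB / (1 - piB).
have k0 : 0 < k by rewrite divr_gt0// subr_gt0.
have hg x : DOD - x * DSD = - k * (DOB - x * DSB) by rewrite /k (@hgE R P qH q1 q2 qL Rth hqH hq1 hq2 hqL hsum).
split; [|split].
- move=> hS.
  have gI x : x \in `[- 2^-1, 2^-1]%classic -> 0 <= DOB - x * DSB.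
    rewrite inE /= in_itv /= => /andP[x1 x2].
    have hx : `|x| <= 2^-1 by rewrite ler_norml x1 x2.
    have : x * DSB <= `|x| * `|DSB| by rewrite -normrM ler_norm.
    have : `|x| * `|DSB| <= 2^-1 * `|DSB| by rewrite ler_wpM2r.
    lra.
  rewrite eV (@EintT_I _ _ HI)// ?mmax//; last by move=> x; rewrite le_max lexx orbT.
  rewrite [X in _ + _ * X](@EintT_I _ _ HI)// ?mmax//; last by move=> x; rewrite le_max lexx orbT.
  rewrite (@Eint_eq _ _ _ _ (fun x => DOB - x * DSB)); last first.
    by move=> x /gI h; rewrite max_l.
  rewrite [X in _ + _ * X](@Eint_eq _ _ _ _ (fun x => 0)); last first.
    move=> x /gI h; rewrite max_r// hg.
    by rewrite mulNr oppr_le0 mulr_ge0// ltW.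
  rewrite Eint0 (@lin _ _ HI _ _ _ (measurable_itv _)).
  rewrite HI /= -(@EintT_I_id _ _ HI)// /Ei; ring.
  all: exact: mmax.
- move=> hS.
  have dsb : DSB < 0 by lra.
  have e1 x : Num.max (DOB - x * DSB) 0 = if x \in `[it, +oo[%classic then DOB - x * DSB else 0.
    rewrite ?inE /= ?mem_setE in_itv /= andbT /it /itilde ler_ndivrMr//.
    case: ifP => h; first by rewrite max_l// subr_ge0.
    by move/negbT: h; rewrite -ltNge => h; rewrite max_r// subr_le0 ltW.
  have e2 x : Num.max (DOD - x * DSD) 0 = if x \in `]-oo, it]%classic then DOD - x * DSD else 0.
    rewrite ?inE /= ?mem_setE in_itv /= /it /itilde ler_ndivlMr// hg.
    case: ifP => h.
      move: h; rewrite -/DOB -/DSB => h.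
      have : DOB - x * DSB <= 0 by lra.
      by move=> h'; rewrite max_l//; nra.
    move/negbT: h; rewrite -ltNge => h.
    move: h; rewrite -/DOB -/DSB => h.
    have : 0 < DOB - x * DSB by lra.
    by move=> h'; rewrite max_r//; nra.
  rewrite eV (@Eint_patch _ _ _ _ _ e1) (@Eint_patch _ _ _ _ _ e2).
  rewrite !(@lin _ _ HI _ _ _ (measurable_itv _)).
  have c1 := @cond _ _ HI `]-oo, it]%classic (measurable_itv _).
  have c2 := @cond _ _ HI `[it, +oo[%classic (measurable_itv _).
  rewrite /Ei_le /Ei_ge !(@Pge _ _ cF it) in c2 *.
  rewrite -/(F P it) in c1 *.
  set r1 := (Eint P `]-oo, it]%classic id / _) in c1 *.
  set r2 := (Eint P `[it, +oo[%classic id / _) in c2 *.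
  rewrite -c1 -c2.
  ring.
- move=> hS.
  have dsb : 0 < DSB by lra.
  have e1 x : Num.max (DOB - x * DSB) 0 = if x \in `]-oo, it]%classic then DOB - x * DSB else 0.
    rewrite ?inE /= ?mem_setE in_itv /= /it /itilde ler_pdivlMr//.
    case: ifP => h; first by rewrite max_l// subr_ge0.
    by move/negbT: h; rewrite -ltNge => h; rewrite max_r// subr_le0 ltW.
  have e2 x : Num.max (DOD - x * DSD) 0 = if x \in `[it, +oo[%classic then DOD - x * DSD else 0.
    rewrite ?inE /= ?mem_setE in_itv /= andbT /it /itilde ler_pdivrMr// hg.
    case: ifP => h.
      move: h; rewrite -/DOB -/DSB => h.
      have : DOB - x * DSB <= 0 by lra.
      by move=> h'; rewrite max_l//; nra.
    move/negbT: h; rewrite -ltNge => h.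
    move: h; rewrite -/DOB -/DSB => h.
    have : 0 < DOB - x * DSB by lra.
    by move=> h'; rewrite max_r//; nra.
  rewrite eV (@Eint_patch _ _ _ _ _ e1) (@Eint_patch _ _ _ _ _ e2).
  rewrite !(@lin _ _ HI _ _ _ (measurable_itv _)).
  have c1 := @cond _ _ HI `]-oo, it]%classic (measurable_itv _).
  have c2 := @cond _ _ HI `[it, +oo[%classic (measurable_itv _).
  rewrite /Ei_le /Ei_ge !(@Pge _ _ cF it) in c2 *.
  rewrite -/(F P it) in c1 *.
  set r1 := (Eint P `]-oo, it]%classic id / _) in c1 *.
  set r2 := (Eint P `[it, +oo[%classic id / _) in c2 *.
  rewrite -c1 -c2.
  ring.
Qed.
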